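(* There exist a finite-dimensional inner product vector space $(E,g)$ over $k$ ($k=\mathbb R$ or $\mathbb C$), an endomorphism $f\in\operatorname{End}_k(E)$ and $f$-invariant subspaces $H_1,\dots,H_n$ with $E=H_1\oplus\dots\oplus H_n$ such that $\widetilde{\mathcal H}_f^\perp\ne[\operatorname{Ker} f]^\perp$ and $\mathcal H_f^\perp\ne[\operatorname{Im} f]^\perp$.
   Context: Write $f_i=f|_{H_i}$. For a subspace $W\subseteq H_i$, $[W]_i^\perp=\{v\in H_i:g(w,v)=0\ \forall w\in W\}$; for a subspace $U\subseteq E$, $U^\perp$ is its orthogonal complement in $E$. Set $\mathcal H_f^\perp=[\operatorname{Im} f_1]_1^\perp\oplus\dots\oplus[\operatorname{Im} f_n]_n^\perp$ and $\widetilde{\mathcal H}_f^\perp=[\operatorname{Ker} f_1]_1^\perp\oplus\dots\oplus[\operatorname{Ker} f_n]_n^\perp$. *)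

(* Defs.v *)
From HB Require Import structures.
From mathcomp Require Import all_boot all_order all_algebra.
From mathcomp Require Import complex.
Set Implicit Arguments. Unset Strict Implicit. Unset Printing Implicit Defensive.
Import Order.TTheory GRing.Theory Num.Theory.
Local Open Scope ring_scope.

(* The finite-dimensional space E is modelled as 'rV[K]_m (every finite-dim
   K-vector space is of this form); subspaces are {vspace 'rV[K]_m}
   and endomorphisms are 'End('rV[K]_m). *)
Notation vec K m := 'rV[K]_m.

(* g is an inner product w.r.t. the conjugation cj (cj = id for k = R,
   cj = complex conjugation for k = C): linear in the second argument,
   (conjugate-)symmetric, positive definite. *)
Definition is_inner_product (K : numFieldType) (cj : K -> K) (m : nat)
  (g : vec K m -> vec K m -> K) : Prop :=
  [/\ forall (a : K) (u v w : vec K m), g u (a *: v + w) = a * g u v + g u w,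
      forall u v : vec K m, g u v = cj (g v u)
    & forall v : vec K m, v != 0 -> 0 < g v v].

Definition orth_in (K : numFieldType) (m : nat) (g : vec K m -> vec K m -> K)
  (H W : {vspace vec K m}) : vec K m -> Prop :=
  fun v => v \in H /\ forall w, w \in W -> g w v = 0.

Definition orth (K : numFieldType) (m : nat) (g : vec K m -> vec K m -> K)
  (U : {vspace vec K m}) : vec K m -> Prop :=
  fun v => forall w, w \in U -> g w v = 0.

Definition sum_sets (K : numFieldType) (m n : nat)
  (S : 'I_n -> vec K m -> Prop) : vec K m -> Prop :=
  fun v => exists vs : 'I_n -> vec K m, (forall i, S i (vs i)) /\ v = \sum_i vs i.

(* restriction f_i = f|_{H_i}: Ker f_i = Ker f ∩ H_i, Im f_i = f(H_i) *)
Definition ker_restr (K : fieldType) (m : nat) (f : 'End(vec K m))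
  (H : {vspace vec K m}) : {vspace vec K m} := (lker f :&: H)%VS.
Definition im_restr (K : fieldType) (m : nat) (f : 'End(vec K m))
  (H : {vspace vec K m}) : {vspace vec K m} := (f @: H)%VS.

Definition Hf_perp (K : numFieldType) (m n : nat) (g : vec K m -> vec K m -> K)
  (f : 'End(vec K m)) (H : 'I_n -> {vspace vec K m}) : vec K m -> Prop :=
  sum_sets (fun i => orth_in g (H i) (im_restr f (H i))).
Definition Hf_tilde_perp (K : numFieldType) (m n : nat) (g : vec K m -> vec K m -> K)
  (f : 'End(vec K m)) (H : 'I_n -> {vspace vec K m}) : vec K m -> Prop :=
  sum_sets (fun i => orth_in g (H i) (ker_restr f (H i))).

Definition same_set (T : Type) (A B : T -> Prop) : Prop := forall x, A x <-> B x.

Definition lemma3p4_over (K : numFieldType) (cj : K -> K) : Prop :=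
  exists (m n : nat) (g : vec K m -> vec K m -> K) (f : 'End(vec K m))
         (H : 'I_n -> {vspace vec K m}),
    [/\ is_inner_product cj g,
        (forall i, (f @: H i <= H i)%VS),
        (\sum_i H i)%VS = fullv,
        directv (\sum_i H i)
      & (~ same_set (Hf_tilde_perp g f H) (orth g (lker f))
         /\ ~ same_set (Hf_perp g f H) (orth g (limg f)))].

(* Main.v *)
Require Import Defs.
From HB Require Import structures.
From mathcomp Require Import all_boot all_order all_algebra.
From mathcomp Require Import complex reals.
From mathcomp Require Import ring lra.
Import Order.TTheory GRing.Theory Num.Theory.
Local Open Scope ring_scope.

Section Gen.
Variables (K : numFieldType) (cj : K -> K).
Hypotheses (cjD : forall x y, cj (x + y) = cj x + cj y)
  (cjM : forall x y, cj (x * y) = cj x * cj y) (cjK : forall x, cj (cj x) = x)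
  (cj0 : cj 0 = 0) (cj1 : cj 1 = 1) (cjpos : forall x, x != 0 -> 0 < cj x * x).

Let i0 : 'I_2 := ord0.
Let i1 : 'I_2 := ord_max.
Definition gg (u v : 'rV[K]_2) : K := cj (u 0 i0) * v 0 i0 + cj (u 0 i1) * v 0 i1.
Definition e1 : 'rV[K]_2 := \row_(j < 2) (if val j == 0%N then 1 else 0).
Definition uu : 'rV[K]_2 := const_mx 1.
Definition AA : 'M[K]_2 := \matrix_(i < 2, j < 2)
  (if val j == 0%N then (if val i == 0%N then 1 else -1) else 0).
Definition ff : 'End('rV[K]_2) := linfun (mulmxr AA).
Definition HH (i : 'I_2) : {vspace 'rV[K]_2} := if val i == 0%N then <[e1]>%VS else <[uu]>%VS.

Lemma ord2P (P : 'I_2 -> Prop) : P i0 -> P i1 -> forall i, P i.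
Proof.
move=> H0 H1 [[|[|k]] Hk] //.
- by have -> : Ordinal Hk = i0 by apply: val_inj.
- by have -> : Ordinal Hk = i1 by apply: val_inj.
Qed.

Lemma sum2 (V : zmodType) (F : 'I_2 -> V) : \sum_i F i = F i0 + F i1.
Proof. rewrite big_ord_recl big_ord1; congr (_ + _); congr F; exact: val_inj. Qed.

Lemma sumv2 (U : 'I_2 -> {vspace 'rV[K]_2}) : (\sum_i U i)%VS = (U i0 + U i1)%VS.
Proof. rewrite big_ord_recl big_ord1; congr (_ + _)%VS; congr U; exact: val_inj. Qed.

Lemma ffE v : ff v = v *m AA.
Proof. by rewrite lfunE. Qed.

Lemma ff_e1 : ff e1 = e1.
Proof.
rewrite ffE; apply/rowP; apply: ord2P; rewrite !mxE sum2 !mxE /=.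
  by rewrite mulr1 mul0r addr0.
by rewrite !mulr0 addr0.
Qed.

Lemma ff_uu : ff uu = 0.
Proof.
rewrite ffE; apply/rowP; apply: ord2P; rewrite !mxE sum2 !mxE /=.
  by rewrite mulr1 mulrN1 subrr.
by rewrite !mulr0 addr0.
Qed.

Lemma gg0 (w : 'rV[K]_2) : gg w 0 = 0.
Proof. by rewrite /gg !mxE !mulr0 addr0. Qed.

Lemma gg_ip : is_inner_product cj gg.
Proof.
split.
- move=> a u v w; rewrite /gg !mxE; ring.
- move=> u v; rewrite /gg cjD !cjM !cjK; ring.
- move=> v nz.
  have [h0|h0] := eqVneq (v 0 i0) 0.
    have h1 : v 0 i1 != 0.
      apply: contraNneq nz => h1; apply/eqP/rowP; apply: ord2P; by rewrite mxE.
    rewrite /gg h0 cj0 mul0r add0r; exact: cjpos.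
  apply: ltr_wpDr; last exact: cjpos.
  have [->|h1] := eqVneq (v 0 i1) 0; first by rewrite mulr0.
  exact/ltW/cjpos.
Qed.

Lemma dec (v : 'rV[K]_2) : v = (v 0 i0 - v 0 i1) *: e1 + v 0 i1 *: uu.
Proof.
apply/rowP; apply: ord2P; rewrite !mxE /=.
  by rewrite mulr1 mulr1 subrK.
by rewrite mulr0 mulr1 add0r.
Qed.

Lemma gen : lemma3p4_over cj.
Proof.
exists 2%N, 2%N, gg, ff, HH.
have full : (\sum_i HH i)%VS = fullv.
  apply/eqP; rewrite eqEsubv subvf /=; apply/subvP => v _.
  rewrite sumv2 [v]dec; apply: memv_add; apply: memvZ; exact: memv_line.
split.
- exact: gg_ip.
- apply: ord2P; rewrite /HH /= limg_line.
    by rewrite ff_e1 subvv.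
  by rewrite ff_uu sub0v.
- exact: full.
- rewrite directvEgeq /= full dimvf /= big_ord_recl big_ord1 /HH /= !dim_vline dim_matrix.
  by case: (_ != 0); case: (_ != 0).
- have e1nz : e1 != 0.
    by apply/eqP => /rowP /(_ i0); rewrite !mxE /= => /eqP; rewrite oner_eq0.
  have gg0l (w : 'rV[K]_2) : gg 0 w = 0 by rewrite /gg !mxE cj0 !mul0r addr0.
  split.
  + move=> /(_ e1) [H _].
    have Ht : Hf_tilde_perp gg ff HH e1.
      exists (fun i : 'I_2 => if val i == 0%N then e1 else 0); split.
        apply: ord2P; rewrite /orth_in /HH /=; split.
        * exact: memv_line.
        * move=> w; rewrite /ker_restr memv_cap memv_ker => /andP[/eqP fw /vlineP[c wc]].
          move: fw; rewrite wc ffE -scalemxAl -ffE ff_e1 => /eqP; rewrite scaler_eq0 (negbTE e1nz) orbF.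
          by move=> /eqP->; rewrite scale0r gg0l.
        * exact: mem0v.
        * by move=> w _; rewrite gg0.
      by rewrite sum2 /= addr0.
    have /(_ uu) := H Ht.
    rewrite memv_ker ff_uu eqxx => /(_ isT).
    by rewrite /gg !mxE /= cj1 !mulr1 mulr0 addr0 => /eqP; rewrite oner_eq0.
  + move=> /(_ uu) [H _].
    have Hp : Hf_perp gg ff HH uu.
      exists (fun i : 'I_2 => if val i == 0%N then 0 else uu); split.
        apply: ord2P; rewrite /orth_in /im_restr /HH /= limg_line; split.
        * exact: mem0v.
        * by move=> w _; rewrite gg0.
        * exact: memv_line.
        * move=> w; rewrite ff_uu => /vlineP[c ->]; by rewrite scaler0 gg0l.
      by rewrite sum2 /= add0r.
    have /(_ e1) := H Hp.
    have -> : e1 \in limg ff by rewrite -ff_e1; apply: memv_img; apply: memvf.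
    move=> /(_ isT).
    by rewrite /gg !mxE /= cj1 cj0 !mulr1 addr0 => /eqP; rewrite oner_eq0.
Qed.
End Gen.

Theorem lemma3p4 (R : realType) :
  lemma3p4_over (K := R) id /\ lemma3p4_over (K := R[i]) Num.conj.
Proof.
split.
- apply: gen => //= x.
  by move=> nz; rewrite -expr2 exprn_even_gt0 //.
- apply: gen.
  + exact: rmorphD.
  + exact: rmorphM.
  + exact: conjCK.
  + exact: rmorph0.
  + exact: rmorph1.
  + by move=> x nz; rewrite mulrC mul_conjC_gt0.
Qed.
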